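(* Let $E\in M_n(\mathbb{FT})$ be idempotent. Then there is an idempotent $E'\in M_n(\mathbb{FT})$ such that $E\,\mathcal{D}\,E'$ and all diagonal entries of $E'$ are equal to $0$.
   Context: $\mathbb{FT}$ is $\mathbb{R}$ with $a\oplus b=\max(a,b)$, $a\otimes b=a+b$; $M_n(\mathbb{FT})$ is the semigroup of real $n\times n$ matrices under $(A\otimes B)_{i,j}=\max_k(A_{i,k}+B_{k,j})$. Green's relations on a semigroup $S$ ($S^1$ is $S$ with an identity adjoined if it has none): $a\,\mathcal{R}\,b$ iff $aS^1=bS^1$, $a\,\mathcal{L}\,b$ iff $S^1a=S^1b$, and $a\,\mathcal{D}\,b$ iff there is $c\in S$ with $a\,\mathcal{R}\,c$ and $c\,\mathcal{L}\,b$. *)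

(* Defs.v *)
From HB Require Import structures.
From mathcomp Require Import all_boot all_order all_algebra.
From mathcomp Require Import reals.
Set Implicit Arguments. Unset Strict Implicit. Unset Printing Implicit Defensive.
Import Order.TTheory GRing.Theory Num.Theory.
Local Open Scope ring_scope.

(* Tropical (max-plus) matrix product on real (n+1)x(n+1) matrices:
   (A (x) B) i j = max_k (A i k + B k j).  The big max is seeded with
   the k = 0 term, which is itself part of the range, so the value is
   exactly the maximum over all k. *)
Definition tmul (R : realType) (n : nat) (A B : 'M[R]_n.+1) : 'M[R]_n.+1 :=
  \matrix_(i, j) \big[Num.max/(A i ord0 + B ord0 j)]_(k < n.+1) (A i k + B k j).

Definition tidem (R : realType) (n : nat) (E : 'M[R]_n.+1) : Prop :=
  tmul E E = E.

(* Green's relations in the semigroup M_n(FT) (S^1: identity adjoined). *)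
Definition tR (R : realType) (n : nat) (A B : 'M[R]_n.+1) : Prop :=
  (A = B \/ exists X, A = tmul B X) /\ (B = A \/ exists Y, B = tmul A Y).
Definition tL (R : realType) (n : nat) (A B : 'M[R]_n.+1) : Prop :=
  (A = B \/ exists X, A = tmul X B) /\ (B = A \/ exists Y, B = tmul Y A).
Definition tD (R : realType) (n : nat) (A B : 'M[R]_n.+1) : Prop :=
  exists C, tR A C /\ tL C B.

(* Main.v *)
Require Import Defs.
From mathcomp Require Import all_boot all_order all_algebra.
From mathcomp Require Import reals.
From Stdlib Require Import Classical.
Import Order.TTheory GRing.Theory Num.Theory.
Local Open Scope ring_scope.

Lemma bmax_ge (R : realType) (I : eqType) (s : seq I) (x0 : R) (F : I -> R) i :
  i \in s -> F i <= \big[Num.max/x0]_(k <- s) F k.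
Proof.
elim: s => [//|a s IH]; rewrite big_cons in_cons => /orP[/eqP->|/IH H];
  by rewrite le_max ?lexx ?H ?orbT.
Qed.

Lemma bmax_le (R : realType) (I : eqType) (s : seq I) (x0 : R) (F : I -> R) y :
  x0 <= y -> (forall i, i \in s -> F i <= y) -> \big[Num.max/x0]_(k <- s) F k <= y.
Proof.
elim: s => [|a s IH] H0 H; rewrite ?big_nil ?big_cons // ge_max H ?mem_head //=.
apply: IH => // i Hi; apply: H; by rewrite in_cons Hi orbT.
Qed.

Lemma bmax_att (R : realType) (I : eqType) (s : seq I) (x0 : R) (F : I -> R) :
  \big[Num.max/x0]_(k <- s) F k = x0 \/ exists2 k, k \in s & \big[Num.max/x0]_(k <- s) F k = F k.
Proof.
elim: s => [|a s IH]; first by left; rewrite big_nil.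
rewrite big_cons.
have [->|->] : Num.max (F a) (\big[Num.max/x0]_(k <- s) F k) = F a \/
    Num.max (F a) (\big[Num.max/x0]_(k <- s) F k) = \big[Num.max/x0]_(k <- s) F k.
  by rewrite /Num.max /Order.max; case: ifP; auto.
- right; exists a => //; exact: mem_head.
- case: IH => [->|[k Hk ->]]; first by left.
  by right; exists k => //; rewrite in_cons Hk orbT.
Qed.

Section S.
Variables (R : realType) (n : nat) (E : 'M[R]_n.+1).
Hypothesis HE : tidem E.

Lemma Eent i j : E i j = \big[Num.max/(E i ord0 + E ord0 j)]_(k < n.+1) (E i k + E k j).
Proof. have H : tmul E E = E := HE. by have := congr1 (fun M : 'M[R]_n.+1 => M i j) H; rewrite /= mxE => <-. Qed.

Lemma tri x y z : E x y + E y z <= E x z.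
Proof. rewrite (Eent x z); apply: (@bmax_ge R _ (index_enum _) _ (fun k => E x k + E k z)); exact: mem_index_enum. Qed.

Lemma diag_le0 i : E i i <= 0.
Proof. by rewrite -(lerD2l (E i i)) addr0 tri. Qed.

Lemma ex_arg x j : exists k, E x j == E x k + E k j.
Proof.
case: (@bmax_att R _ (index_enum 'I_n.+1) (E x ord0 + E ord0 j) (fun k => E x k + E k j)).
  by rewrite -Eent => ->; exists ord0.
by move=> [k _]; rewrite -Eent => ->; exists k.
Qed.

Lemma crit i j : exists c, E c c = 0 /\ E i j = E i c + E c j.
Proof.
pose f x := xchoose (ex_arg x j).
have Hf x : E x j = E x (f x) + E (f x) j by apply/eqP; exact: (xchooseP (ex_arg x j)).
have Q t : E i j = E i (iter t f (f i)) + E (iter t f (f i)) j.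
  elim: t => [|t IH] /=; first exact: Hf.
  set d := iter t f (f i). apply: le_anti; rewrite tri andbT.
  by rewrite {1}IH (Hf d) addrA lerD2r tri.
have Cy c m : E c j <= E c (iter m.+1 f c) + E (iter m.+1 f c) j.
  elim: m => [|m IH]; first by rewrite /= -Hf.
  rewrite iterS; set d := iter m.+1 f c in IH *. apply: (le_trans IH).
  by rewrite (Hf d) addrA lerD2r tri.
pose g (t : 'I_n.+2) : 'I_n.+1 := iter t f (f i).
have [a [b [Hab Hne]]] : exists a b, g a = g b /\ (a < b)%N.
  apply: NNPP => H.
  have Hinj : injective g.
    move=> a b Hab; apply: val_inj; case: (ltngtP a b) => // Hlt; exfalso; apply: H.
    - by exists a, b.
    - by exists b, a.
  by have := @leq_card _ ('I_n.+1) g Hinj; rewrite !card_ord ltnn.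
exists (g a); split.
  apply: le_anti; rewrite diag_le0 /=.
  have := Cy (g a) (b - a).-1; rewrite prednK ?subn_gt0 //.
  rewrite /g -iterD subnK ?(ltnW Hne) // -/(g b) -Hab.
  by rewrite -{1}[E (g a) j]add0r lerD2r.
exact: Q.
Qed.

End S.

Theorem theorem6p2 (R : realType) (n : nat) (E : 'M[R]_n.+1) :
  tidem E ->
  exists E' : 'M[R]_n.+1,
    tidem E' /\ tD E E' /\ (forall i, E' i i = 0).
Proof.
move=> HE.
have tri' := @tri R n E HE.
have [c0 [Hc0 _]] := @crit R n E HE ord0 ord0.
pose s i := if E i i == 0 then i else c0.
have Hs i : E (s i) (s i) = 0 by rewrite /s; case: eqP.
have Hss c : E c c = 0 -> s c = c by rewrite /s => ->; rewrite eqxx.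
pose X := \matrix_(k, j) E k (s j).
pose Y := \matrix_(i, k) E (s i) k.
pose F := \matrix_(i, j) E (s i) (s j).
have Hidx (x : 'I_n.+1) : x \in index_enum 'I_n.+1 by exact: mem_index_enum.
exists F; split; [|split].
- apply/matrixP => i j; rewrite !mxE; apply: le_anti; apply/andP; split.
    apply: bmax_le => [|k _]; rewrite ?mxE ?tri' //.
  apply: le_trans; last (apply: (@bmax_ge R _ _ _ _ i (Hidx i))); by rewrite !mxE Hs add0r.
- exists X; split; split; right.
  + exists Y; apply/matrixP => i j; rewrite !mxE; apply: le_anti; apply/andP; split.
      have [c [Hc ->]] := @crit R n E HE i j.
      apply: le_trans; last (apply: (@bmax_ge R _ _ _ _ c (Hidx c))); by rewrite !mxE Hss.
    apply: bmax_le => [|k _]; rewrite ?mxE ?tri' //.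
  + exists X; apply/matrixP => i j; rewrite !mxE; rewrite (@Eent R n E HE).
    rewrite ?mxE; by apply: eq_bigr => k _; rewrite !mxE.
  + exists X; apply/matrixP => i j; rewrite !mxE; apply: le_anti; apply/andP; split.
      apply: le_trans; last (apply: (@bmax_ge R _ _ _ _ j (Hidx j))); by rewrite !mxE Hs addr0.
    apply: bmax_le => [|k _]; rewrite ?mxE ?tri' //.
  + exists Y; apply/matrixP => i j; rewrite !mxE; rewrite (@Eent R n E HE).
    by apply: eq_bigr => k _; rewrite !mxE.
- by move=> i; rewrite mxE Hs.
Qed.
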